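(* Let $\mathbb{T}$ be a finite time scale and $a\in\mathbb{T}$ such that exactly $m$ elements of $\mathbb{T}$ are larger than $a$ and exactly $r$ elements are smaller than $a$, where $m\geq1$, $r\geq0$ and $r+m\geq2$; thus $\mathbb{T}$ has $n=m+r+1$ elements. Let $\alpha=\min\mathbb{T}$, $\beta=\rho(\max\mathbb{T})$ (the second largest element of $\mathbb{T}$), let $q$ be real-valued, and consider the boundary value problem $$-y^{\Delta\Delta}(t)+q(t)\,y(a)=\lambda\, y^{\sigma}(t),\quad t\in\mathbb{T}^{\kappa^{2}},\qquad U(y)=0,\quad V(y)=0,$$ where $U(y)=a_{11}y(\alpha)+a_{12}y^{\Delta}(\alpha)+a_{21}y(\beta)+a_{22}y^{\Delta}(\beta)$ and $V(y)=b_{11}y(\alpha)+b_{12}y^{\Delta}(\alpha)+b_{21}y(\beta)+b_{22}y^{\Delta}(\beta)$ with real coefficients $a_{ij},b_{ij}$. Let $$A=\begin{pmatrix}a_{11}\mu(\alpha)-a_{12} & b_{11}\mu(\alpha)-b_{12}\\ a_{22} & b_{22}\end{pmatrix}.$$ If $\det A\neq0$, the problem has exactly $n-2$ eigenvalues counted with multiplicities; otherwise the number of eigenvalues counted with multiplicities is less than $n-2$.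
   Context: For a time scale $\mathbb{T}$, $\sigma$, $\rho$ are the forward and backward jump operators, $\mu(t)=\sigma(t)-t$, $y^{\sigma}=y\circ\sigma$, $y^{\Delta}$, $y^{\Delta\Delta}$ are the delta derivatives (on a finite time scale $y^{\Delta}(t)=(y(\sigma(t))-y(t))/\mu(t)$), $\mathbb{T}^{\kappa}$ is $\mathbb{T}$ with its largest element removed and $\mathbb{T}^{\kappa^2}=(\mathbb{T}^{\kappa})^{\kappa}$. An eigenvalue is a $\lambda\in\mathbb{C}$ for which the problem has a nontrivial solution. Let $S(t,\lambda)$, $C(t,\lambda)$ be the solutions of the equation with $S(a,\lambda)=0$, $S^{\Delta}(a,\lambda)=1$, $C(a,\lambda)=1$, $C^{\Delta}(a,\lambda)=0$ and $\Delta(\lambda)=U(C)V(S)-V(C)U(S)$; on a finite time scale $\Delta(\lambda)$ is a polynomial in $\lambda$ whose zeros are exactly the eigenvalues, and the multiplicity of an eigenvalue is its multiplicity as a zero of $\Delta$. *)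

(* Defs.v *)
From HB Require Import structures.
From mathcomp Require Import all_boot all_order all_algebra.
From mathcomp Require Import reals.
From mathcomp Require Import complex.
Set Implicit Arguments. Unset Strict Implicit. Unset Printing Implicit Defensive.
Import Order.TTheory GRing.Theory Num.Theory.
Local Open Scope ring_scope.
Local Open Scope complex_scope.

Section TimeScale.
Variable R : realType.
Local Notation C := (R[i]).

(* A finite time scale is represented by the strictly increasing list [ts]
   of its elements (sorted <%R ts). *)

Definition tsigma (ts : seq R) (t : R) : R := head t [seq x <- ts | t < x].
Definition trho (ts : seq R) (t : R) : R := last t [seq x <- ts | x < t].
Definition tmu (ts : seq R) (t : R) : R := tsigma ts t - t.
Definition tmin (ts : seq R) : R := head 0 ts.
Definition tmax (ts : seq R) : R := last 0 ts.
Definition tkappa (ts : seq R) : seq R := take (size ts).-1 ts.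
Definition tkappa2 (ts : seq R) : seq R := tkappa (tkappa ts).

Definition tdelta (ts : seq R) (y : R -> C) (t : R) : C :=
  (y (tsigma ts t) - y t) / (tmu ts t)%:C.

Definition solves (ts : seq R) (q : R -> R) (a : R) (lam : C) (y : R -> C) : Prop :=
  forall t, t \in tkappa2 ts ->
    - tdelta ts (tdelta ts y) t + (q t)%:C * y a = lam * y (tsigma ts t).

Definition bform (ts : seq R) (c11 c12 c21 c22 : R) (y : R -> C) : C :=
  let al := tmin ts in let be := trho ts (tmax ts) in
  c11%:C * y al + c12%:C * tdelta ts y al + c21%:C * y be + c22%:C * tdelta ts y be.

Definition Amat (ts : seq R) (a11 a12 a22 b11 b12 b22 : R) : 'M[R]_2 :=
  \matrix_(i < 2, j < 2)
    if i == 0 then (if j == 0 then a11 * tmu ts (tmin ts) - a12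
                              else b11 * tmu ts (tmin ts) - b12)
    else (if j == 0 then a22 else b22).

End TimeScale.

Definition nzeros_mult (F : fieldType) (p : {poly F}) (k : nat) : Prop :=
  p != 0 /\ exists s : seq F,
    [/\ uniq s, (forall z, root p z -> z \in s) & (\sum_(z <- s) mup z p)%N = k].

(* Main.v *)
Require Import Defs.
From HB Require Import structures.
From mathcomp Require Import all_boot all_order all_algebra.
From mathcomp Require Import reals.
From mathcomp Require Import complex.
From mathcomp Require Import ring zify.
Import Order.TTheory GRing.Theory Num.Theory.
Local Open Scope ring_scope.
Local Open Scope complex_scope.
Set Implicit Arguments. Unset Strict Implicit. Unset Printing Implicit Defensive.

Section Rec.
Variable F : fieldType.
Variables (mu qq : nat -> F) (r : nat).

Fixpoint fw (z d : F) (k : nat) : {poly F} * {poly F} :=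
  match k with
  | 0 => (z%:P, d%:P)
  | k'.+1 => let p := fw z d k' in let i := (r + k')%N in
     let y' := p.1 + (mu i)%:P * p.2 in
     (y', p.2 + (mu i)%:P * ((qq i * z)%:P - 'X * y'))
  end.

Fixpoint bw (z d : F) (k : nat) : {poly F} * {poly F} :=
  match k with
  | 0 => (z%:P, d%:P)
  | k'.+1 => let p := bw z d k' in let i := (r - k'.+1)%N in
     let D := p.2 - (mu i)%:P * ((qq i * z)%:P - 'X * p.1) in
     (p.1 - (mu i)%:P * D, D)
  end.

Lemma size_CM (c : F) (p : {poly F}) : (size (c%:P * p)%R <= size p)%N.
Proof. by rewrite mul_polyC size_scale_leq. Qed.

Lemma size_XM_le (p : {poly F}) k : (size p <= k)%N -> (size ('X * p)%R <= k.+1)%N.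
Proof.
move=> h; have [->|nz] := eqVneq p 0; first by rewrite mulr0 size_poly0.
by rewrite mulrC size_mulX.
Qed.

Lemma size_addB_le (p q : {poly F}) k :
  (size p <= k)%N -> (size q <= k)%N -> (size (p + q)%R <= k)%N /\ (size (p - q)%R <= k)%N.
Proof.
move=> hp hq; split; apply: leq_trans (size_add _ _) _; rewrite geq_max hp //=.
by rewrite size_opp.
Qed.

Lemma fw_size z d k : [/\ (size (fw z d k).1 <= maxn k 1)%N, (size (fw z d k).2 <= k.+1)%N
   & (fw z d k).1`_k = (if k == 0%N then z else 0)].
Proof.
elim: k => [|k [h1 h2 h3]] /=.
  by rewrite !size_polyC_leq1 coefC.
have hy : (size ((fw z d k).1 + (mu (r + k))%:P * (fw z d k).2)%R <= k.+1)%N.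
  apply: (size_addB_le _ _).1; last exact: leq_trans (size_CM _ _) h2.
  by apply: leq_trans h1 _; rewrite geq_max leqnSn /= ltn0Sn.
split.
- by apply: leq_trans hy _; rewrite leq_maxl.
- apply: (size_addB_le _ _).1; first exact: leq_trans h2 _.
  apply: leq_trans (size_CM _ _) _.
  apply: (size_addB_le _ _).2; first exact: leq_trans (size_polyC_leq1 _) _.
  exact: size_XM_le.
- by rewrite nth_default.
Qed.

Lemma fw_coef z d k : (fw z d k.+1).2`_k.+1 =
   - mu (r + k) * ((if k == 0%N then z else 0) + mu (r + k) * (fw z d k).2`_k).
Proof.
have [h1 h2 h3] := fw_size z d k.
rewrite /= coefD coefCM coefB coefC coefXM /= coefD coefCM h3 (nth_default _ h2).
by rewrite add0r sub0r mulrN mulNr.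
Qed.

Lemma bw_size z d k : (size (bw z d k).1 <= k.+1)%N /\ (size (bw z d k).2 <= k.+1)%N.
Proof.
elim: k => [|k [h1 h2]] /=; first by rewrite !size_polyC_leq1.
have hD : (size ((bw z d k).2 - (mu (r - k.+1))%:P * ((qq (r - k.+1) * z)%:P - 'X * (bw z d k).1))%R <= k.+2)%N.
  apply: (size_addB_le _ _).2; first exact: leq_trans h2 _.
  apply: leq_trans (size_CM _ _) _.
  apply: (size_addB_le _ _).2; first exact: leq_trans (size_polyC_leq1 _) _.
  exact: size_XM_le.
split=> //; apply: (size_addB_le _ _).2; first exact: leq_trans h1 _.
exact: leq_trans (size_CM _ _) _.
Qed.

Lemma bw_coef z d k : (bw z d k.+1).2`_k.+1 = mu (r - k.+1) * (bw z d k).1`_k /\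
   (bw z d k.+1).1`_k.+1 = - mu (r - k.+1) * (bw z d k.+1).2`_k.+1.
Proof.
have [h1 h2] := bw_size z d k.
split.
  rewrite /= coefB coefCM coefB coefC coefXM /= (nth_default _ h2).
  by rewrite sub0r sub0r mulrN opprK.
rewrite [in LHS]/= coefB coefCM (nth_default _ h1) sub0r mulNr.
by [].
Qed.

End Rec.

Section Rec2.
Variable F : fieldType.
Variables (mu qq : nat -> F) (r : nat).
Notation fw := (fw mu qq r).
Notation bw := (bw mu qq r).

Definition wf k := (fw 1 0 k).1 * (fw 0 1 k).2 - (fw 1 0 k).2 * (fw 0 1 k).1.
Definition wb k := (bw 1 0 k).1 * (bw 0 1 k).2 - (bw 1 0 k).2 * (bw 0 1 k).1.

Lemma wf_step k : wf k.+1 = wf k - (mu (r + k) * qq (r + k))%:P * (fw 0 1 k.+1).1.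
Proof.
rewrite /wf /=; rewrite !mulr0 mulr1 polyC0 polyCM.
set a := (fw 1 0 k).1; set b := (fw 1 0 k).2; set c := (fw 0 1 k).1; set e := (fw 0 1 k).2.
ring.
Qed.

Lemma wb_step k : wb k.+1 = wb k + (mu (r - k.+1) * qq (r - k.+1))%:P * (bw 0 1 k).1.
Proof.
rewrite /wb /=; rewrite !mulr0 mulr1 polyC0 polyCM.
set a := (bw 1 0 k).1; set b := (bw 1 0 k).2; set c := (bw 0 1 k).1; set e := (bw 0 1 k).2.
ring.
Qed.

Lemma size_le_coef0 (p : {poly F}) k : (size p <= k.+1)%N -> p`_k = 0 -> (size p <= k)%N.
Proof.
move=> h c; rewrite leq_eqVlt in h; case/orP: h => [/eqP e|]; last by [].
have : lead_coef p = 0 by rewrite lead_coefE e /= c.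
by move/eqP; rewrite lead_coef_eq0 => /eqP p0; rewrite p0 size_poly0 in e.
Qed.

Lemma bwS_coef k : (bw 0 1 k).1`_k = 0 /\ (bw 0 1 k).2`_k = (k == 0%N)%:R.
Proof.
case: k => [|k] /=; first by rewrite !coefC.
have [h1 h2] := bw_coef mu qq r 0 1 k.
suff e : (bw 0 1 k).1`_k = 0 by rewrite h2 h1 e !mulr0.
elim: k {h1 h2} => [|k IH]; first by rewrite /= coefC.
by have [h1 h2] := bw_coef mu qq r 0 1 k; rewrite h2 h1 IH !mulr0.
Qed.

Lemma bwS_size1 k : (size (bw 0 1 k).1 <= k)%N.
Proof. by apply: size_le_coef0; [exact: (bw_size mu qq r 0 1 k).1 | exact: (bwS_coef k).1]. Qed.

Lemma size_wf k : (size (wf k) <= maxn k 1)%N.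
Proof.
elim: k => [|k IH].
  by rewrite /wf /= !polyC0 !mulr0 subr0 mulr1 size_polyC_leq1.
rewrite wf_step; apply: (size_addB_le _ _).2.
  by apply: leq_trans IH _; rewrite geq_max !leq_max leqnSn ltn0Sn orbT.
apply: leq_trans (size_CM _ _) _.
by have [h _ _] := fw_size mu qq r 0 1 k.+1.
Qed.

Lemma size_wb k : (size (wb k) <= maxn k 1)%N.
Proof.
elim: k => [|k IH].
  by rewrite /wb /= !polyC0 !mulr0 subr0 mulr1 size_polyC_leq1.
rewrite wb_step; apply: (size_addB_le _ _).1.
  by apply: leq_trans IH _; rewrite geq_max !leq_max leqnSn ltn0Sn orbT.
apply: leq_trans (size_CM _ _) _.
by apply: leq_trans (bwS_size1 k) _; rewrite leq_max leqnSn.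
Qed.

Hypothesis mu_nz : forall i, mu i != 0.

Lemma bwC_coef k : (bw 1 0 k).1`_k != 0 /\ ((0 < k)%N -> (bw 1 0 k).2`_k != 0).
Proof.
elim: k => [|k [IH1 IH2]]; first by rewrite /= coefC /= oner_neq0.
have [h1 h2] := bw_coef mu qq r 1 0 k.
have e : (bw 1 0 k.+1).2`_k.+1 != 0 by rewrite h1 mulf_neq0.
split; last by []. by rewrite h2 mulf_neq0 // oppr_eq0.
Qed.

Lemma fwS_coef k : (fw 0 1 k).2`_k != 0.
Proof.
elim: k => [|k IH]; first by rewrite /= coefC /= oner_neq0.
by rewrite fw_coef if_same add0r mulf_neq0 ?oppr_eq0 ?mulf_neq0.
Qed.

Lemma fwSC_coef k : (0 < k)%N -> (fw 1 0 k).2`_k != 0 /\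
   (fw 0 1 k).2`_k = mu r * (fw 1 0 k).2`_k.
Proof.
case: k => [//|k] _; elim: k => [|k [IH1 IH2]].
  rewrite !fw_coef /= !coefC /= addn0 !mulr0 addr0 add0r mulr1.
  by split; [rewrite mulf_neq0 ?oppr_eq0 ?oner_neq0 | ring].
have e : (k.+1 == 0%N) = false by [].
rewrite !(fw_coef _ _ _ _ _ k.+1) e !add0r IH2.
split; first by rewrite !mulf_neq0 ?oppr_eq0.
by ring.
Qed.

End Rec2.

Lemma coefM_top (F : fieldType) (p q : {poly F}) a b :
  (size p <= a.+1)%N -> (size q <= b.+1)%N -> (p * q)`_(a + b) = p`_a * q`_b.
Proof.
move=> hp hq; rewrite coefM.
have ha : (a < (a + b).+1)%N by rewrite ltnS leq_addr.
rewrite (bigD1 (Ordinal ha)) //= subDnCA // subnn addn0 big1 ?addr0 // => j /eqP ne.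
have [lt|ge] := ltnP j a.
  rewrite [q`__]nth_default ?mulr0 //; apply: leq_trans hq _.
  by rewrite ltn_subRL ltn_add2r.
rewrite [p`__]nth_default ?mul0r //; apply: leq_trans hp _.
rewrite ltn_neqAle ge andbT; apply/eqP => e; apply: ne; exact: val_inj.
Qed.

Lemma poly_ext (F : numFieldType) (p q : {poly F}) :
  (forall x, p.[x] = q.[x]) -> p = q.
Proof.
move=> h; apply/eqP; rewrite -subr_eq0; apply/negPn/negP => nz.
pose rs := [seq i%:R : F | i <- iota 0 (size (p - q))].
have := max_poly_roots nz (rs := rs).
rewrite size_map size_iota ltnn => H; suff: false by []; apply: H.
  by apply/allP => x _; rewrite /root hornerD hornerN h subrr.
rewrite map_inj_uniq ?iota_uniq //.
by move=> i j /eqP; rewrite eqr_nat => /eqP.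
Qed.

Lemma nzeros_size (F : closedFieldType) (p : {poly F}) :
  p != 0 -> nzeros_mult p (size p).-1.
Proof.
move=> nz; split=> //.
have [rs def] := closed_field_poly_normal p.
have lc : lead_coef p != 0 by rewrite lead_coef_eq0.
have hmup : forall z, mup z p = count_mem z rs.
  move=> z; rewrite def -mul_polyC mupM ?polyC_eq0 //; last first.
    by rewrite monic_neq0 // monic_prod_XsubC.
  by rewrite mupNroot ?mu_prod_XsubC // rootC.
exists (undup rs); split.
- exact: undup_uniq.
- move=> z; rewrite def rootZ // root_prod_XsubC mem_undup; exact.
- rewrite (eq_bigr (fun z => count_mem z rs)) //.
  rewrite def size_scale // size_prod_XsubC /=.
  have := big_undup_iterop_count addn rs predT (fun _ => 1%N).
  rewrite sum1_size => <-; apply: eq_bigr => i _.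
  by case: (count_mem i rs) => //= k; elim: k => //= k ->.
Qed.

Section Seqs.
Variable R : realType.
Variable ts : seq R.
Hypothesis Hs : sorted <%R ts.
Local Notation t i := (nth 0 ts i).

Lemma ts_lt i j : (i < j)%N -> (j < size ts)%N -> t i < t j.
Proof.
move=> ij js; apply: (sorted_ltn_nth lt_trans 0 Hs) => //; rewrite inE //.
exact: ltn_trans ij js.
Qed.

Lemma filter_gt i : (i < size ts)%N -> [seq x <- ts | t i < x] = drop i.+1 ts.
Proof.
move=> hi; rewrite -[X in filter _ X](cat_take_drop i.+1 ts) filter_cat.
rewrite (eq_in_filter (a2 := pred0)) ?filter_pred0; last first.
  move=> x /(nthP 0) [j hj <-]; rewrite size_take in hj.
  have hj' : (j <= i)%N by move: hj; case: ifP => h1 hj; clear -hj hi h1; lia.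
  rewrite nth_take; last by apply: leq_ltn_trans hj' _.
  rewrite /=; case: (ltngtP j i) hj' => // [ji|->] _; last by rewrite ltxx.
  by rewrite lt_gtF // ts_lt.
rewrite (eq_in_filter (a2 := predT)) ?filter_predT //.
move=> x /(nthP 0) [j hj <-]; rewrite size_drop in hj.
change (is_true (j < size ts - i.+1)%N) in hj.
rewrite nth_drop /= ts_lt //; clear -hj hi; lia.
Qed.

Lemma filter_lt i : (i < size ts)%N -> [seq x <- ts | x < t i] = take i ts.
Proof.
move=> hi; rewrite -[X in filter _ X](cat_take_drop i ts) filter_cat.
rewrite [X in _ ++ X](eq_in_filter (a2 := pred0)) ?filter_pred0; last first.
  move=> x /(nthP 0) [j hj <-]; rewrite size_drop in hj.
  rewrite nth_drop /=; case: j hj => [|j] hj; first by rewrite addn0 ltxx.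
  change (is_true (j.+1 < size ts - i)%N) in hj.
  by rewrite lt_gtF // ts_lt //; clear -hj hi; lia.
rewrite cats0 (eq_in_filter (a2 := predT)) ?filter_predT //.
move=> x /(nthP 0) [j hj <-]; rewrite size_take hi in hj.
by rewrite nth_take //= ts_lt.
Qed.

Lemma sigma_t i : (i.+1 < size ts)%N -> tsigma ts (t i) = t i.+1.
Proof.
move=> h; rewrite /tsigma filter_gt ?(ltn_trans _ h) //.
by rewrite -nth0 nth_drop addn0 (set_nth_default 0).
Qed.

Lemma rho_max : (2 <= size ts)%N -> trho ts (tmax ts) = t (size ts).-2.
Proof.
move=> h; have e : tmax ts = t (size ts).-1.
  by rewrite /tmax (last_nth 0); case: ts h => //= x s _; rewrite (set_nth_default 0).
rewrite /trho e filter_lt; last by case: (size ts) h.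
rewrite (last_nth 0) size_take; case: (size ts) h => // [[|n]] // _.
rewrite ltnSn /= nth_take //= (set_nth_default 0) //. 
Qed.

Lemma tkappa2_t i : (i.+2 < size ts)%N -> t i \in tkappa2 ts.
Proof.
move=> h; rewrite /tkappa2 /tkappa size_take.
have -> : ((size ts).-1 < size ts)%N by case: (size ts) h.
rewrite take_takel; last exact: leq_pred.
have hi : (i < (size ts).-2)%N by case: (size ts) h => // [[|n]].
apply/(nthP 0); exists i.
  by rewrite size_takel //; case: (size ts) => // [[|n]] //=; rewrite ltnW.
by rewrite nth_take.
Qed.

Lemma tdelta_t (y : R -> R[i]) i : (i.+1 < size ts)%N ->
  tdelta ts y (t i) = (y (t i.+1) - y (t i)) / (tmu ts (t i))%:C.
Proof. by move=> h; rewrite /tdelta sigma_t. Qed.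

End Seqs.

Section Eval.
Variable F : fieldType.
Variables (mu qq : nat -> F) (r : nat).
Notation fw := (fw mu qq r).
Notation bw := (bw mu qq r).
Variables (z d x : F) (Y Dv : nat -> F) (M : nat).
Hypothesis E1 : forall i, (i < M)%N -> Y i.+1 = Y i + mu i * Dv i.
Hypothesis E2 : forall i, (i.+1 < M)%N -> Dv i.+1 = Dv i + mu i * (qq i * Y r - x * Y i.+1).
Hypothesis Yr : Y r = z.
Hypothesis Dr : Dv r = d.

Lemma fw_eval k : (r + k < M)%N -> (fw z d k).1.[x] = Y (r + k) /\ (fw z d k).2.[x] = Dv (r + k).
Proof.
elim: k => [|k IH] h; first by rewrite /= !hornerC addn0 Yr Dr.
rewrite addnS in h.
have h' : (r + k < M)%N by exact: ltnW.
have [h1 h2] := IH h'.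
rewrite /= !hornerE h1 h2 addnS -Yr.
have e1 := E1 h'; have e2 := E2 h.
by split; [rewrite e1 | rewrite e2 e1].
Qed.

Lemma bw_eval k : (r < M)%N -> (k <= r)%N ->
  (bw z d k).1.[x] = Y (r - k) /\ (bw z d k).2.[x] = Dv (r - k).
Proof.
move=> rM; elim: k => [|k IH] h; first by rewrite /= !hornerC subn0 Yr Dr.
have [h1 h2] := IH (ltnW h).
have ei : (r - k.+1).+1 = (r - k)%N by rewrite subnSK.
have h3 : ((r - k.+1).+1 < M)%N by rewrite ei; exact: leq_ltn_trans (leq_subr _ _) rM.
have e1 := E1 (ltnW h3); have e2 := E2 h3; rewrite ei in e1 e2.
rewrite /= !hornerE h1 h2 -Yr.
have g2 : Dv (r - k) - mu (r - k.+1) * (qq (r - k.+1) * Y r - x * Y (r - k)) = Dv (r - k.+1).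
  by rewrite e2 addrK.
by split; [rewrite g2 e1 addrK | exact: g2].
Qed.
End Eval.

Definition Ub (F : fieldType) (c1 c2 c3 c4 : F) (pl pr : {poly F} * {poly F}) :=
  c1%:P * pl.1 + c2%:P * pl.2 + c3%:P * pr.1 + c4%:P * pr.2.

Lemma size_lin (F : fieldType) (c1 c2 : F) (p q : {poly F}) k :
  (size p <= k)%N -> (size q <= k)%N -> (size (c1%:P * p + c2%:P * q)%R <= k)%N.
Proof.
move=> hp hq; apply: (size_addB_le _ _).1; exact: leq_trans (size_CM _ _) _.
Qed.

Lemma coef_lin (F : fieldType) (c1 c2 : F) (p q : {poly F}) k :
  (c1%:P * p + c2%:P * q)`_k = c1 * p`_k + c2 * q`_k.
Proof. by rewrite coefD !coefCM. Qed.

Lemma key (F : fieldType) (A1 A2 A3 A4 B1 B2 B3 B4 : F) (pCl pCr pSl pSr : {poly F} * {poly F}) r m' :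
  (size pCl.1 <= r.+1)%N -> (size pCl.2 <= r.+1)%N ->
  (size pSl.1 <= r.+1)%N -> (size pSl.2 <= r.+1)%N ->
  (size pCr.1 <= m'.+1)%N -> (size pCr.2 <= m'.+1)%N ->
  (size pSr.1 <= m'.+1)%N -> (size pSr.2 <= m'.+1)%N ->
  (size (pCl.1 * pSl.2 - pCl.2 * pSl.1)%R <= r + m')%N ->
  (size (pCr.1 * pSr.2 - pCr.2 * pSr.1)%R <= r + m')%N ->
  let P := Ub A1 A2 A3 A4 pCl pCr * Ub B1 B2 B3 B4 pSl pSr
         - Ub B1 B2 B3 B4 pCl pCr * Ub A1 A2 A3 A4 pSl pSr in
  (size P <= (r + m').+1)%N /\
  P`_(r + m') =
    (A1 * pCl.1`_r + A2 * pCl.2`_r) * (B3 * pSr.1`_m' + B4 * pSr.2`_m')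
  + (A3 * pCr.1`_m' + A4 * pCr.2`_m') * (B1 * pSl.1`_r + B2 * pSl.2`_r)
  - (B1 * pCl.1`_r + B2 * pCl.2`_r) * (A3 * pSr.1`_m' + A4 * pSr.2`_m')
  - (B3 * pCr.1`_m' + B4 * pCr.2`_m') * (A1 * pSl.1`_r + A2 * pSl.2`_r).
Proof.
move=> h1 h2 h3 h4 h5 h6 h7 h8 wl wr P.
set UlC := A1%:P * pCl.1 + A2%:P * pCl.2.
set VlC := B1%:P * pCl.1 + B2%:P * pCl.2.
set UlS := A1%:P * pSl.1 + A2%:P * pSl.2.
set VlS := B1%:P * pSl.1 + B2%:P * pSl.2.
set UrC := A3%:P * pCr.1 + A4%:P * pCr.2.
set VrC := B3%:P * pCr.1 + B4%:P * pCr.2.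
set UrS := A3%:P * pSr.1 + A4%:P * pSr.2.
set VrS := B3%:P * pSr.1 + B4%:P * pSr.2.
set Wl := pCl.1 * pSl.2 - pCl.2 * pSl.1 in wl.
set Wr := pCr.1 * pSr.2 - pCr.2 * pSr.1 in wr.
have eP : P = (A1 * B2 - A2 * B1)%:P * Wl + (A3 * B4 - A4 * B3)%:P * Wr
   + (UlC * VrS + UrC * VlS - VlC * UrS - VrC * UlS).
  rewrite /P /Ub /Wl /Wr /UlC /VlC /UlS /VlS /UrC /VrC /UrS /VrS !polyCB !polyCM.
  ring.
have sprod : forall X Y : {poly F}, (size X <= r.+1)%N -> (size Y <= m'.+1)%N ->
   (size (X * Y)%R <= (r + m').+1)%N /\ (X * Y)`_(r + m') = X`_r * Y`_m'.
  move=> X Y sX sY.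
  split; last exact: coefM_top.
  apply: leq_trans (size_mul_leq _ _) _.
  by move: sX sY; clear; lia.
have [s1 c1] := sprod UlC VrS (size_lin _ _ h1 h2) (size_lin _ _ h7 h8).
have [s2 c2] := sprod VlS UrC (size_lin _ _ h3 h4) (size_lin _ _ h5 h6).
have [s3 c3] := sprod VlC UrS (size_lin _ _ h1 h2) (size_lin _ _ h7 h8).
have [s4 c4] := sprod UlS VrC (size_lin _ _ h3 h4) (size_lin _ _ h5 h6).
have sW1 : (size ((A1 * B2 - A2 * B1)%:P * Wl)%R <= r + m')%N by apply: leq_trans (size_CM _ _) wl.
have sW2 : (size ((A3 * B4 - A4 * B3)%:P * Wr)%R <= r + m')%N by apply: leq_trans (size_CM _ _) wr.
rewrite eP; split.
  apply: (size_addB_le _ _).1; first by apply: (size_addB_le _ _).1; apply: leq_trans (leqnSn _).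
  rewrite [UrC * VlS]mulrC [VrC * UlS]mulrC.
  apply: (size_addB_le _ _).2 => //; apply: (size_addB_le _ _).2 => //.
  exact: (size_addB_le _ _).1.
rewrite !coefD !coefN (nth_default _ sW1) (nth_default _ sW2) !add0r.
rewrite [UrC * VlS]mulrC [VrC * UlS]mulrC c1 c2 c3 c4 /UlC /VlC /UlS /VlS /UrC /VrC /UrS /VrS !coef_lin.
ring.
Qed.
Lemma detA (R : realType) (ts : seq R) a11 a12 a22 b11 b12 b22 :
  \det (Amat ts a11 a12 a22 b11 b12 b22) =
  (a11 * tmu ts (tmin ts) - a12) * b22 - (b11 * tmu ts (tmin ts) - b12) * a22.
Proof.
rewrite (expand_det_row _ 0) !big_ord_recl big_ord0 /cofactor !det_mx11 /= !mxE /=.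
rewrite /bump /= expr0 expr1 mul1r mulN1r addr0 mulrN.
by rewrite -/(tmin ts) -/(tmin ts).
Qed.
Lemma cC (R : realType) (x y : R) : (x * y - x)%:C = x%:C * y%:C - x%:C.
Proof. by rewrite rmorphB rmorphM. Qed.

Unset Implicit Arguments.
Set Strict Implicit.

Theorem theorem2 (R : realType) (ts : seq R) (a : R) (m r : nat)
  (q : R -> R) (a11 a12 a21 a22 b11 b12 b21 b22 : R)
  (S Cs : R[i] -> R -> R[i]) (D : {poly R[i]}) :
  sorted <%R ts -> a \in ts ->
  size [seq x <- ts | a < x] = m -> size [seq x <- ts | x < a] = r ->
  (1 <= m)%N -> (2 <= r + m)%N ->
  (forall lam, solves ts q a lam (S lam) /\ S lam a = 0 /\ tdelta ts (S lam) a = 1) ->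
  (forall lam, solves ts q a lam (Cs lam) /\ Cs lam a = 1 /\ tdelta ts (Cs lam) a = 0) ->
  (forall lam, D.[lam] =
      bform ts a11 a12 a21 a22 (Cs lam) * bform ts b11 b12 b21 b22 (S lam)
    - bform ts b11 b12 b21 b22 (Cs lam) * bform ts a11 a12 a21 a22 (S lam)) ->
  (\det (Amat ts a11 a12 a22 b11 b12 b22) != 0 -> nzeros_mult D (size ts - 2)) /\
  (\det (Amat ts a11 a12 a22 b11 b12 b22) = 0 -> D != 0 ->
     exists k, (k < size ts - 2)%N /\ nzeros_mult D k).
Proof.
move=> Hs ain Hm Hr m1 rm2 HS HC HD.
have r_lt : (index a ts < size ts)%N by rewrite index_mem.
have ar : a = nth 0 ts (index a ts) by rewrite nth_index.
have er : r = index a ts.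
  have := filter_lt Hs r_lt; rewrite -ar => e.
  by rewrite -Hr e size_takel // ltnW.
have em : m = (size ts - (index a ts).+1)%N.
  have := filter_gt Hs r_lt; rewrite -ar => e.
  by rewrite -Hm e size_drop.
rewrite -er in ar r_lt em.
have hsz : size ts = (r + m).+1 by move: em r_lt m1; clear; lia.
clear er em Hm Hr.
pose t i := nth 0 ts i.
pose N := (r + m.-1)%N.
pose mu' i := if (i.+1 < size ts)%N then (tmu ts (t i))%:C else 1.
pose qq i := (q (t i))%:C.
have mu_pos : forall i, (i.+1 < size ts)%N -> tmu ts (t i) != 0.
  move=> i hi; rewrite /tmu sigma_t // subr_eq0 gt_eqF //.
  by apply: ts_lt.
have mu_nz : forall i, mu' i != 0.
  move=> i; rewrite /mu'; case: ifP => hi; last exact: oner_neq0.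
  apply: contra (mu_pos i hi) => /eqP h; apply/eqP; apply: (@complexI R).
  by rewrite h rmorph0.
have ar' : a = t r by [].
have evals : forall lam (y : R -> R[i]) z d, solves ts q a lam y -> y a = z -> tdelta ts y a = d ->
  [/\ (bw mu' qq r z d r).1.[lam] = y (t 0%N), (bw mu' qq r z d r).2.[lam] = tdelta ts y (t 0%N),
      (fw mu' qq r z d m.-1).1.[lam] = y (t N) & (fw mu' qq r z d m.-1).2.[lam] = tdelta ts y (t N)].
  move=> lam y z d sol ya da.
  pose Y i := y (t i); pose Dv i := tdelta ts y (t i).
  have E1 : forall i, (i < (size ts).-1)%N -> Y i.+1 = Y i + mu' i * Dv i.
    move=> i hi; have hi' : (i.+1 < size ts)%N by move: hi; clear; lia.
    have hm := mu_nz i; rewrite /mu' hi' in hm.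
    rewrite /Y /Dv /mu' hi' /tdelta sigma_t //.
    by rewrite [_ * (_ / _)]mulrC divfK // addrC subrK.
  have E2 : forall i, (i.+1 < (size ts).-1)%N -> Dv i.+1 = Dv i + mu' i * (qq i * Y r - lam * Y i.+1).
    move=> i hi; have hi' : (i.+2 < size ts)%N by move: hi; clear; lia.
    have hi1 : (i.+1 < size ts)%N by move: hi; clear; lia.
    have hm := mu_nz i; rewrite /mu' hi1 in hm.
    have e := sol (t i) (tkappa2_t hi').
    have ex : tdelta ts (tdelta ts y) (t i) = (Dv i.+1 - Dv i) / (tmu ts (t i))%:C.
      exact: tdelta_t.
    rewrite ex sigma_t // in e.
    rewrite /mu' hi1 /Y -e.
    rewrite /qq -ar'.
    field.
    exact: hm.
  have Yr : Y r = z by rewrite /Y -ar'.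
  have Dr : Dv r = d by rewrite /Dv -ar'.
  have rM : (r < (size ts).-1)%N by rewrite hsz; move: m1; clear; lia.
  have rN : (r + m.-1 < (size ts).-1)%N by rewrite hsz; move: m1; clear; lia.
  have [b1 b2] := @bw_eval _ mu' qq r z d lam Y Dv (size ts).-1 E1 E2 Yr Dr r rM (leqnn r).
  have [f1 f2] := @fw_eval _ mu' qq r z d lam Y Dv (size ts).-1 E1 E2 Yr Dr m.-1 rN.
  by rewrite b1 b2 f1 f2 subnn.
have eN : (size ts).-2 = N by rewrite hsz /N; move: m1; clear; lia.
have hbf : forall c11 c12 c21 c22 (y : R -> R[i]), bform ts c11 c12 c21 c22 y =
   c11%:C * y (t 0%N) + c12%:C * tdelta ts y (t 0%N) + c21%:C * y (t N) + c22%:C * tdelta ts y (t N).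
  move=> c11 c12 c21 c22 y; rewrite /bform (rho_max Hs); last by rewrite hsz; move: rm2; clear; lia.
  by rewrite eN /tmin -nth0.
pose pCl := bw mu' qq r 1 0 r. pose pSl := bw mu' qq r 0 1 r.
pose pCr := fw mu' qq r 1 0 m.-1. pose pSr := fw mu' qq r 0 1 m.-1.
pose P := Ub a11%:C a12%:C a21%:C a22%:C pCl pCr * Ub b11%:C b12%:C b21%:C b22%:C pSl pSr
         - Ub b11%:C b12%:C b21%:C b22%:C pCl pCr * Ub a11%:C a12%:C a21%:C a22%:C pSl pSr.
have DP : D = P.
  apply: poly_ext => lam; rewrite HD !hbf.
  have [sC [C1 C2]] := HC lam; have [sS [S1 S2]] := HS lam.
  have [c1 c2 c3 c4] := evals lam (Cs lam) 1 0 sC C1 C2.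
  have [s1 s2 s3 s4] := evals lam (S lam) 0 1 sS S1 S2.
  by rewrite -c1 -c2 -c3 -c4 -s1 -s2 -s3 -s4 /P /Ub !hornerE.
have mx1 : forall k, (maxn k 1 <= k.+1)%N by move=> k; rewrite geq_max leqnSn ltn0Sn.
have [fC1 fC2 fC3] := fw_size mu' qq r 1 0 m.-1.
have [fS1 fS2 fS3] := fw_size mu' qq r 0 1 m.-1.
have wl : (maxn r 1 <= r + m.-1)%N by move: m1 rm2; clear; lia.
have wr : (maxn m.-1 1 <= r + m.-1)%N by move: m1 rm2; clear; lia.
have [sP cP] := @key _ a11%:C a12%:C a21%:C a22%:C b11%:C b12%:C b21%:C b22%:C pCl pCr pSl pSr r m.-1
  (bw_size mu' qq r 1 0 r).1 (bw_size mu' qq r 1 0 r).2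
  (bw_size mu' qq r 0 1 r).1 (bw_size mu' qq r 0 1 r).2
  (leq_trans fC1 (mx1 _)) fC2 (leq_trans fS1 (mx1 _)) fS2
  (leq_trans (size_wb mu' qq r r) wl) (leq_trans (size_wf mu' qq r m.-1) wr).
rewrite -/P -/N in sP cP.
have [hSl1 hSl2] := bwS_coef mu' qq r r.
rewrite if_same in fS3.
rewrite hSl1 hSl2 fS3 fC3 in cP.
pose detC := (a11%:C * mu' 0%N - a12%:C) * b22%:C - (b11%:C * mu' 0%N - b12%:C) * a22%:C.
have hK : exists2 K, K != 0 & P`_N = K * detC.
  have [r0|rpos] := eqVneq r 0%N.
    have hm : (0 < m.-1)%N by move: rm2; rewrite r0; clear; lia.
    have [dC dSC] := fwSC_coef qq r mu_nz hm.
    have cA : pCl.1`_r = 1 by rewrite /pCl r0 /= coefC.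
    have cB : pCl.2`_r = 0 by rewrite /pCl r0 /= coefC.
    exists (pCr.2`_m.-1) => //.
    have e : (m.-1 == 0%N) = false by move: hm; clear; case: (m.-1).
    rewrite -/pCr -/pSr in dSC.
    rewrite cP cA cB dSC e r0 eqxx /detC /=.
    ring.
  have rpos' : (0 < r)%N by rewrite lt0n.
  have [_ cBnz] := bwC_coef qq r mu_nz r.
  have cA : pCl.1`_r = - mu' 0%N * pCl.2`_r.
    have := (bw_coef mu' qq r 1 0 r.-1).2; rewrite prednK // subnn; exact.
  exists (- (pSr.2`_m.-1 * pCl.2`_r)).
    by rewrite oppr_eq0 mulf_neq0 // ?(fwS_coef qq r mu_nz m.-1) ?cBnz.
  have e : (r == 0%N) = false by apply/negbTE.
  rewrite cP cA e /detC /=.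
  set g := if _ then _ else _.
  ring.
have hdet : (\det (Amat ts a11 a12 a22 b11 b12 b22))%:C = detC.
  have h1 : (1 < size ts)%N by rewrite hsz; move: rm2; clear; lia.
  rewrite detA /detC /mu' h1 /tmin -nth0.
  by rewrite !(rmorphB, rmorphM).
have [K Knz hKc] := hK.
have sD : (size D <= N.+1)%N by rewrite DP.
have cD : D`_N = K * (\det (Amat ts a11 a12 a22 b11 b12 b22))%:C by rewrite DP hKc hdet.
have eN2 : (size ts - 2)%N = N by rewrite hsz /N; move: m1; clear; lia.
rewrite eN2; split.
  move=> dnz.
  have cnz : D`_N != 0.
    rewrite cD mulf_neq0 //; apply: contra dnz => /eqP h; apply/eqP; apply: (@complexI R).
    by rewrite h rmorph0.
  have Dnz : D != 0 by apply: contraNneq cnz => ->; rewrite coef0.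
  have sz : size D = N.+1.
    apply/eqP; rewrite eqn_leq sD /= ltnNge; apply: contra cnz => h; apply/eqP.
    exact: nth_default.
  by have := nzeros_size Dnz; rewrite sz.
move=> d0 Dnz.
have c0 : D`_N = 0 by rewrite cD d0 rmorph0 mulr0.
have sz : (size D <= N)%N := size_le_coef0 sD c0.
exists (size D).-1; split; last exact: nzeros_size.
have : (0 < size D)%N by rewrite size_poly_gt0.
by move: sz; clear; lia.
Qed.
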